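(* Let $n\ge 1$ and $d$ be positive integers, and define $a_1=d$ and $a_k=d\big(1+\sum_{j=1}^{k-1}a_j\big)$ for every integer $k\in\{2,\dots,n\}$. Let $\mathbf{z}=(z_0,z_1,\dots,z_n)\in\mathbb{R}\times[0,d]^n$. Then every integer vector $\mathbf{x}=(x_0,\dots,x_n)\in\mathbb{Z}\times([0,d]\cap\mathbb{Z})^n$ with $\mathbf{x}\le_L\mathbf{z}$ satisfies the linear inequalities $$x_i+\sum_{j=0}^{i-1}a_{i-j}\,(x_j-\lceil z_j\rceil)\le \lfloor z_i\rfloor\qquad\text{for all } i\in\{0,\dots,n\},$$ where for $i=0$ the sum is empty (equal to $0$).
   Context: For $\mathbf{x},\mathbf{y}\in\mathbb{R}^{n+1}$, $\mathbf{x}=(x_0,\dots,x_n)$ is lexicographically lower than $\mathbf{y}=(y_0,\dots,y_n)$, written $\mathbf{x}<_L\mathbf{y}$, if there is $k\in\{0,\dots,n\}$ with $x_k<y_k$ and $x_i=y_i$ for all $i<k$; $\mathbf{x}\le_L\mathbf{y}$ means $\mathbf{x}<_L\mathbf{y}$ or $\mathbf{x}=\mathbf{y}$. *)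

(* Defs.v *)
From HB Require Import structures.
From mathcomp Require Import all_boot all_order all_algebra.
From mathcomp Require Export reals.
Set Implicit Arguments. Unset Strict Implicit. Unset Printing Implicit Defensive.
Import Order.TTheory GRing.Theory Num.Theory.
Local Open Scope ring_scope.

Definition lex_lt (R : numDomainType) (n : nat) (x y : 'I_n.+1 -> R) : Prop :=
  exists k : 'I_n.+1, x k < y k /\ forall i : 'I_n.+1, (i < k)%N -> x i = y i.

Definition lex_le (R : numDomainType) (n : nat) (x y : 'I_n.+1 -> R) : Prop :=
  lex_lt x y \/ x = y.

(* Main.v *)
Require Import Defs.
From HB Require Import structures.
From mathcomp Require Import all_boot all_order all_algebra.
From mathcomp Require Import reals.
From mathcomp Require Import zify ring.
Import Order.TTheory GRing.Theory Num.Theory.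
Local Open Scope ring_scope.

Lemma rev_sum_aux (f : nat -> int) L : forall K,
  \sum_(K.+1 <= m < K + L) f (K + L - m)%N = \sum_(1 <= j < L) f j.
Proof.
elim: L => [|L IH] K.
  by rewrite !big_geq // addn0.
case: L IH => [|L] IH.
  by rewrite !big_geq // addn1.
rewrite big_ltn; last by lia.
have := IH K.+1; rewrite addSnnS => ->.
rewrite (big_nat_recr L.+1 1) //= addrC.
have -> : (K + L.+2 - K.+1 = L.+1)%N by lia.
by [].
Qed.

Theorem proposition3 (R : realType) (n d : nat) (a : nat -> int)
  (hn : (1 <= n)%N) (hd : (0 < d)%N)
  (ha1 : a 1%N = d%:Z)
  (hak : forall k : nat, (2 <= k <= n)%N ->
           a k = d%:Z * (1 + \sum_(1 <= j < k) a j))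
  (z : 'I_n.+1 -> R)
  (hz : forall i : 'I_n.+1, (0 < i)%N -> 0 <= z i <= d%:R)
  (x : 'I_n.+1 -> int)
  (hx : forall i : 'I_n.+1, (0 < i)%N -> 0 <= x i <= d%:Z)
  (hxz : lex_le (fun i => (x i)%:~R) z) :
  forall i : 'I_n.+1,
    x i + \sum_(j < n.+1 | (j < i)%N) a (i - j)%N * (x j - Num.ceil (z j))
      <= Num.floor (z i).
Proof.
have a_ge0 : forall m, (1 <= m <= n)%N -> 0 <= a m.
  elim/ltn_ind => m IH /andP[m1 mn].
  have [->|m2] := eqVneq m 1%N; first by rewrite ha1.
  rewrite hak; last by rewrite mn andbT ltn_neqAle eq_sym m2 m1.
  apply: mulr_ge0 => //; apply: addr_ge0 => //.
  rewrite big_nat_cond; apply: sumr_ge0 => j /andP[/andP[j1 jm] _].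
  apply: IH => //; rewrite j1 /=; exact: ltnW (leq_trans jm mn).
move=> i.
set X := fun m : nat => x (inord m).
set Z := fun m : nat => z (inord m).
have hXi : x i = X i by rewrite /X inord_val.
have hZi : z i = Z i by rewrite /Z inord_val.
have conv : \sum_(j < n.+1 | (j < i)%N) a (i - j)%N * (x j - Num.ceil (z j))
   = \sum_(0 <= m < i) a (i - m)%N * (X m - Num.ceil (Z m)).
  rewrite (big_nat_widen 0 i n.+1 xpredT); last exact: ltnW (ltn_ord i).
  rewrite big_mkord; apply: eq_big => // j; by rewrite /X /Z inord_val.
rewrite conv hXi hZi.
have hX : forall m, (0 < m <= n)%N -> 0 <= X m <= d%:Z.
  move=> m /andP[m0 mn]; have := hx (inord m); rewrite inordK; last by lia.
  by apply.
have hZ : forall m, (0 < m <= n)%N -> 0 <= Z m <= d%:R.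
  move=> m /andP[m0 mn]; have := hz (inord m); rewrite inordK; last by lia.
  by apply.
have ilt : (i < n.+1)%N := ltn_ord i.
case: hxz => [[k [hk hpre]]|hxe]; last first.
  have hZX : forall m, Z m = (X m)%:~R by move=> m; rewrite /Z -hxe.
  rewrite big1 ?addr0; first by rewrite hZX intrKfloor.
  by move=> m _; rewrite hZX intrKceil subrr mulr0.
set K := nat_of_ord k.
have hZX : forall m, (m < K)%N -> Z m = (X m)%:~R.
  move=> m mK; rewrite /Z /X (hpre (inord m)) // inordK //.
  exact: ltn_trans mK (ltn_ord k).
have zero : forall p, (p <= K)%N -> \sum_(0 <= m < p) a (i - m)%N * (X m - Num.ceil (Z m)) = 0.
  move=> p pK; rewrite big_nat_cond big1 // => m /andP[/andP[_ mp] _].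
  by rewrite hZX ?intrKceil ?subrr ?mulr0 //; exact: leq_trans mp pK.
have hXK : X K = x k by rewrite /X /K inord_val.
have hZK : Z K = z k by rewrite /Z /K inord_val.
case: (ltngtP i K) => iK.
- rewrite zero ?addr0; last exact: ltnW.
  by rewrite hZX // intrKfloor.
- rewrite (big_cat_nat _ (n:=K)) //=; last exact: ltnW.
  rewrite zero // add0r big_ltn //.
  set L := (i - K)%N.
  have iKL : nat_of_ord i = (K + L)%N by rewrite /L; lia.
  have L1 : (1 <= L <= n)%N by rewrite /L; lia.
  have aL0 : 0 <= a L := a_ge0 _ L1.
  have t1 : a L * (X K - Num.ceil (Z K)) <= - a L.
    rewrite -[- a L]mulrN1; apply: ler_wpM2l => //.
    have : X K < Num.ceil (Z K) by rewrite ceil_gt_int hXK hZK.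
    move=> h; rewrite lerBlDr addrC lerBrDr lezD1; exact: h.
  have t2 : \sum_(K.+1 <= m < i) a (i - m)%N * (X m - Num.ceil (Z m))
            <= (\sum_(1 <= j < L) a j) * d%:Z.
    rewrite -(rev_sum_aux a L K) -iKL mulr_suml.
    apply: ler_sum_nat => m /andP[m1 mi].
    have mn : (0 < m <= n)%N by rewrite (leq_trans (ltn0Sn K) m1) (leq_trans (ltnW mi) ilt).
    apply: ler_wpM2l; first by apply: a_ge0; rewrite subn_gt0 mi (leq_trans (leq_subr m i) (ilt : (i <= n)%N)).
    have /andP[_ Xd] := hX m mn.
    have /andP[Z0 _] := hZ m mn.
    have c0 : 0 <= Num.ceil (Z m) by rewrite ceil_ge0 (lt_le_trans _ Z0) // ltrN10.
    rewrite lerBlDr; apply: (le_trans Xd); rewrite lerDl; exact: c0.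
  have haL : a L = d%:Z * (1 + \sum_(1 <= j < L) a j).
    have [L_1|L2] := eqVneq L 1%N.
      by rewrite L_1 big_geq // addr0 mulr1.
    apply: hak; case/andP: L1 => L0 Ln; by rewrite Ln andbT ltn_neqAle eq_sym L2 L0.
  have /andP[_ Xi] : 0 <= X i <= d%:Z by apply: hX; rewrite (leq_trans (ltn0Sn K) iK) (ilt : (i <= n)%N).
  have /andP[Zi0 _] : 0 <= Z i <= d%:R by apply: hZ; rewrite (leq_trans (ltn0Sn K) iK) (ilt : (i <= n)%N).
  have f0 : 0 <= Num.floor (Z i) by rewrite floor_ge0.
  apply: le_trans f0.
  have h3 := lerD t1 t2.
  have h4 := lerD Xi h3.
  apply: (le_trans h4).
  rewrite haL le_eqVlt; apply/orP; left; apply/eqP; ring.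
- rewrite zero ?addr0; last by rewrite iK.
  rewrite iK floor_ge_int hXK hZK; exact: ltW.
Qed.
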